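(* Every tree with at least three vertices has at least one saturated vertex.
   Context: A $2$-matching of a graph $G$ is a set of edges such that every vertex is incident to at most two of them; a maximum $2$-matching is one of largest possible size. A vertex $w$ is saturated in $G$ if every maximum $2$-matching of $G$ has exactly two edges incident to $w$. *)

(* Defs.v *)
From mathcomp Require Import all_boot.
Set Implicit Arguments. Unset Strict Implicit. Unset Printing Implicit Defensive.

Definition simple_graph (T : finType) (e : rel T) : Prop :=
  symmetric e /\ irreflexive e.

Definition edges (T : finType) (e : rel T) : {set {set T}} :=
  [set E : {set T} | [exists x, exists y, e x y && (E == [set x; y])]].

Definition connected_graph (T : finType) (e : rel T) : Prop :=
  forall x y : T, connect e x y.

Definition acyclic_graph (T : finType) (e : rel T) : Prop :=
  forall c : seq T, uniq c -> 3 <= size c -> ~~ cycle e c.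

Definition is_tree (T : finType) (e : rel T) : Prop :=
  simple_graph e /\ connected_graph e /\ acyclic_graph e.

Definition incident (T : finType) (M : {set {set T}}) (v : T) : {set {set T}} :=
  [set E in M | v \in E].

Definition two_matching (T : finType) (e : rel T) (M : {set {set T}}) : Prop :=
  M \subset edges e /\ forall v : T, #|incident M v| <= 2.

Definition max_two_matching (T : finType) (e : rel T) (M : {set {set T}}) : Prop :=
  two_matching e M /\ forall M', two_matching e M' -> #|M'| <= #|M|.

Definition saturated (T : finType) (e : rel T) (w : T) : Prop :=
  forall M, max_two_matching e M -> #|incident M w| = 2.

(* Main.v *)
Require Import Defs.
From mathcomp Require Import all_boot.
From Stdlib Require Import Classical.
Set Implicit Arguments. Unset Strict Implicit. Unset Printing Implicit Defensive.

Definition good (T : finType) (e : rel T) (c w : T) :=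
  forall a b, e c a -> e c b -> a != w -> b != w -> a = b.

Lemma edge_in (T : finType) (e : rel T) x y : e x y -> [set x; y] \in edges e.
Proof. by move=> h; rewrite /edges inE; apply/existsP; exists x; apply/existsP; exists y; rewrite h eqxx. Qed.

Lemma incident_U1 (T : finType) (X : {set T}) (M : {set {set T}}) v :
  #|incident (X |: M) v| <= (v \in X) + #|incident M v|.
Proof.
have -> : incident (X |: M) v = [set E in [set X] | v \in E] :|: incident M v.
  apply/setP => E; rewrite /incident !inE. by case: (E == X); case: (v \in E); case: (E \in M).
rewrite cardsU (leq_trans (leq_subr _ _)) // leq_add2r.
case: (boolP (v \in X)) => hv.
  apply: (@leq_trans #|[set X]|); last by rewrite cards1.
  by apply: subset_leq_card; apply/subsetP => E; rewrite !inE => /andP[-> _].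
rewrite leqn0 cards_eq0; apply/eqP/setP => E; rewrite !inE.
by case: eqP => // ->; rewrite (negbTE hv).
Qed.

Lemma sat (T : finType) (e : rel T) (w c1 c2 : T) :
  symmetric e -> irreflexive e ->
  e w c1 -> e w c2 -> c1 != c2 -> good e c1 w -> good e c2 w -> saturated e w.
Proof.
move=> sym irr e1 e2 n12 g1 g2 M [[sub deg] mx].
apply/eqP; rewrite eqn_leq deg /=; apply/negPn/negP; rewrite -leqNgt => hw.
have [c [ec gc nM]] : exists c, [/\ e w c, good e c w & [set w; c] \notin M].
  case: (boolP ([set w; c1] \in M)) => h1; last by exists c1.
  case: (boolP ([set w; c2] \in M)) => h2; last by exists c2.
  exfalso.
  have : #|[set [set w; c1]; [set w; c2]]| <= 1.
    apply: leq_trans hw; apply: subset_leq_card; apply/subsetP => E.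
    by rewrite !inE => /orP[] /eqP ->; rewrite !inE ?h1 ?h2 eqxx ?orbT.
  rewrite cards2 ltnS leqn0 eqb0 negbK => /eqP/setP/(_ c1).
  rewrite !inE eqxx orbT => /esym/orP[] /eqP h.
    by rewrite h irr in e1.
  by rewrite h eqxx in n12.
have hc : #|incident M c| <= 1.
  have key : forall E, E \in incident M c -> exists d, [/\ e c d, d != w & E = [set c; d]].
    move=> E; rewrite inE => /andP[EM cE].
    move/subsetP: sub => /(_ E EM); rewrite inE => /existsP[a] /existsP[b] /andP[eab /eqP EE].
    move: cE EM; rewrite EE !inE => /orP[] /eqP ? EM; subst.
      exists b; split => //.
      by apply/eqP => bw; subst; rewrite setUC EM in nM.
    exists a; split; first by rewrite sym.
      by apply/eqP => aw; subst; rewrite EM in nM.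
    by rewrite setUC.
  apply/card_le1_eqP => E1 E2 /key[d1 [ed1 nd1 ->]] /key[d2 [ed2 nd2 ->]].
  by rewrite (gc d1 d2).
have tm : two_matching e ([set w; c] |: M).
  split.
    apply/subsetP => E; rewrite in_setU1 => /orP[/eqP -> | /(subsetP sub) //].
    exact: edge_in.
  move=> v; apply: leq_trans (incident_U1 _ _ _) _.
  rewrite !inE; case: (boolP (v == w)) => [/eqP -> //|_].
  case: (boolP (v == c)) => [/eqP -> //|_] /=.
  exact: deg.
have := mx _ tm; rewrite cardsU1 nM add1n ltnn //.
Qed.
Set Implicit Arguments. Unset Strict Implicit. Unset Printing Implicit Defensive.

Definition upath (T : finType) (e : rel T) x s := path e x s && uniq (x :: s).

Lemma nochord (T : finType) (e : rel T) x s1 y s2 :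
  acyclic_graph e -> path e x (s1 ++ y :: s2) -> uniq (x :: s1 ++ y :: s2) ->
  s1 != [::] -> e y x -> False.
Proof.
move=> acyc hp hu hs1 eyx.
have hu' : uniq (x :: rcons s1 y).
  move: hu; rewrite -cats1.
  have -> : x :: s1 ++ y :: s2 = (x :: s1 ++ [:: y]) ++ s2 by rewrite /= -catA.
  by rewrite cat_uniq => /andP[].
have hsz : 3 <= size (x :: rcons s1 y) by rewrite /= size_rcons; case: s1 hs1 {hp hu hu'}.
move/negP: (acyc _ hu' hsz); apply.
rewrite /cycle rcons_path last_rcons eyx andbT rcons_path.
by move: hp; rewrite cat_path /= => /and3P[-> ->].
Qed.

Lemma leafend (T : finType) (e : rel T) N a s y :
  symmetric e -> irreflexive e -> acyclic_graph e ->
  (forall b t, upath e b t -> size t <= N) ->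
  upath e a s -> size s = N -> e a y -> y = head a s.
Proof.
move=> sym irr acyc hmax /andP[hp hu] hs eay.
case: (boolP (y \in a :: s)) => hin.
  move: hin; rewrite inE => /orP[/eqP ya | ys].
    by rewrite ya irr in eay.
  move: hp hu; case/splitPr: ys => s1 s2 hp hu.
  case: s1 hp hu => [//|z s1] hp hu.
  by exfalso; apply: (nochord acyc hp hu) => //; rewrite sym.
have : upath e y (a :: s) by rewrite /upath /= sym eay hp hin.
by move/hmax; rewrite /= hs ltnn.
Qed.

Lemma maxpath (T : finType) (e : rel T) (x0 : T) :
  exists x s, upath e x s /\ forall b t, upath e b t -> size t <= size s.
Proof.
apply: NNPP => H.
have step : forall x s, upath e x s -> exists y t, upath e y t /\ size s < size t.
  move=> x s hu; apply: NNPP => H2; apply: H; exists x, s; split => // b t hbt.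
  rewrite leqNgt; apply/negP => lt; apply: H2; by exists b, t.
have big : forall k, exists x s, upath e x s /\ k <= size s.
  elim => [|k [x [s [hu hk]]]]; first by exists x0, [::].
  have [y [t [ht hst]]] := step _ _ hu.
  by exists y, t; split => //; apply: leq_ltn_trans hst.
have [x [s [/andP[_ hu] hk]]] := big #|T|.
have := max_card (mem (x :: s)).
by rewrite (card_uniqP hu) /= ltnNge hk.
Qed.

Lemma closed_conn (T : finType) (e : rel T) (S : {set T}) x z :
  (forall a b, a \in S -> e a b -> b \in S) -> x \in S -> connect e x z -> z \in S.
Proof.
move=> cl xS /connectP[p hp ->].
elim: p x xS hp => [//|y p IH] x xS /= /andP[exy hp].
exact: IH (cl _ _ xS exy) hp.
Qed.

Theorem corollary2p7 (T : finType) (e : rel T) :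
  is_tree e -> 3 <= #|T| -> exists w : T, saturated e w.
Proof.
move=> [[sym irr] [conn acyc]] h3.
have /card_gt0P[x0 _] : 0 < #|T| by apply: leq_trans h3.
have [x [s [hu hmax]]] := maxpath e x0.
have small : forall S : {set T}, #|S| <= 2 -> x \in S ->
    (forall a b, a \in S -> e a b -> b \in S) -> False.
  move=> S hS xS cl.
  have : #|T| <= #|S|.
    by apply: subset_leq_card; apply/subsetP => z _; exact: closed_conn cl xS (conn x z).
  by move=> /(leq_trans h3) /(leq_trans)/(_ hS).
have LE := leafend sym irr acyc hmax.
case: s hu hmax LE => [|v1 [|v2 r]] hu hmax LE.
- exfalso; apply: (small [set x]); [by rewrite cards1 | by rewrite inE | ].
  move=> a b; rewrite inE => /eqP -> exb.
  by rewrite (LE _ _ _ hu erefl exb) inE.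
- exfalso; apply: (small [set x; v1]); [by rewrite cards2; case: (_ != _) | by rewrite !inE eqxx | ].
  have hu' : upath e v1 [:: x].
    by move: hu; rewrite /upath /= !inE !andbT sym eq_sym.
  move=> a b; rewrite !inE => /orP[] /eqP -> hb.
    by rewrite (LE _ _ _ hu erefl hb) eqxx orbT.
  by rewrite (LE _ _ _ hu' erefl hb) eqxx.
move: (hu) => /andP[hp huq].
move: (hp) => /= /andP[exv1] /andP[ev12 hpr].
move: (huq); rewrite /= !inE !negb_or => /andP[/and3P[nxv1 nxv2 nxr]] /andP[/andP[nv12 nv1r]] /andP[nv2r ur].
have hx : forall y, e x y -> y = v1 by move=> y /(LE _ _ _ hu erefl).
have goodx : forall w, w != v1 -> good e x v1.
  by move=> _ _ a b /hx -> _ /eqP.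
case: (boolP [exists y, [&& e v1 y, y != x & y != v2]]).
  case/existsP => y /and3P[ey nyx nyv2].
  have nyr : y \notin r.
    apply/negP => yr; move: hpr nv1r nv2r ur; case/splitPr: yr => r1 r2 hpr nv1r nv2r ur.
    apply: (nochord (x:=v1) (s1:=v2 :: r1) (y:=y) (s2:=r2) acyc) => //.
    - by rewrite /= ev12.
    - by rewrite /= inE negb_or nv12 nv1r nv2r ur.
    by rewrite sym.
  have nyv1 : y != v1 by apply/eqP => h; rewrite h irr in ey.
  have hy : forall b, e y b -> b = v1.
    move=> b eb; have hup : upath e y [:: v1, v2 & r].
      by rewrite /upath /= sym ey ev12 hpr /= !inE !negb_or nyv1 nyv2 nyr nv12 nv1r nv2r ur.
    exact: (LE _ _ _ hup erefl eb).
  exists v1; apply: (sat (c1:=x) (c2:=y) sym irr) => //.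
  - by rewrite sym.
  - by rewrite eq_sym.
  - by move=> a b /hx -> _ /eqP.
  - by move=> a b /hy -> _ /eqP.
move/existsPn => hv1'.
have hv1 : forall y, e v1 y -> y = x \/ y = v2.
  move=> y ey; move: (hv1' y); rewrite ey /= negb_and !negbK => /orP[] /eqP; by [left|right].
case: (boolP [exists z, [&& e v2 z, z != v1 & z != head v2 r]]); last first.
  move/existsPn => hv2.
  have hv2b : forall a, e v2 a -> a != v1 -> a = head v2 r.
    by move=> a ea na; move: (hv2 a); rewrite ea na /= negbK => /eqP.
  exists v1; apply: (sat (c1:=x) (c2:=v2) sym irr) => //.
  - by rewrite sym.
  - by move=> a b /hx -> _ /eqP.
  - by move=> a b ea eb na nb; rewrite (hv2b _ ea na) (hv2b _ eb nb).
case/existsP => z /and3P[ez nzv1 nzh].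
have nzv2 : z != v2 by apply/eqP => h; rewrite h irr in ez.
have nzx : z != x.
  apply/eqP => h; rewrite h sym in ez; have := hx _ ez => h'.
  by rewrite h' eqxx in nv12.
have nzr : z \notin r.
  apply/negP => zr; move: hpr nv1r nv2r ur nzh; case/splitPr: zr => r1 r2 hpr nv1r nv2r ur nzh.
  case: r1 hpr nv1r nv2r ur nzh => [|z1 r1] hpr nv1r nv2r ur nzh; first by rewrite /= eqxx in nzh.
  apply: (nochord (x:=v2) (s1:=z1 :: r1) (y:=z) (s2:=r2) acyc) => //.
  - by move: nv2r ur; rewrite /= => -> ->.
  - by rewrite sym.
have hz : forall y, e z y -> y != v2 -> forall b, e y b -> b = z.
  move=> y ey nyv2 b eb.
  have nyz : y != z by apply/eqP => h; rewrite h irr in ey.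
  have nyx : y != x.
    apply/eqP => h; rewrite h sym in ey; have := hx _ ey => h'.
    by rewrite h' eqxx in nzv1.
  have nyv1 : y != v1.
    apply/eqP => h; rewrite h sym in ey; case: (hv1 _ ey) => h'.
      by rewrite h' eqxx in nzx.
    by rewrite h' eqxx in nzv2.
  have nyr : y \notin r.
    apply/negP => yr; move: hpr nv1r nv2r ur nzr; case/splitPr: yr => r1 r2 hpr nv1r nv2r ur nzr.
    apply: (nochord (x:=z) (s1:=v2 :: r1) (y:=y) (s2:=r2) acyc) => //.
    - by rewrite /= -(sym v2) ez hpr.
    - by rewrite /= !inE !negb_or nzv2 nzr nv2r ur.
    - by rewrite sym.
  have hup : upath e y [:: z, v2 & r].
    by rewrite /upath /= -(sym z) ey -(sym v2) ez hpr /= !inE !negb_or nyz nyv2 nyr nzv2 nzr nv2r ur.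
  exact: (LE _ _ _ hup erefl eb).
case: (boolP [exists y1, exists y2, [&& e z y1, e z y2, y1 != v2, y2 != v2 & y1 != y2]]).
  case/existsP => y1 /existsP[y2 /and5P[e1 e2 n1 n2 n12]].
  exists z; apply: (sat (c1:=y1) (c2:=y2) sym irr) => //.
  - by move=> a b /(hz _ e1 n1) -> _ /eqP.
  - by move=> a b /(hz _ e2 n2) -> _ /eqP.
move=> hD.
exists v2; apply: (sat (c1:=v1) (c2:=z) sym irr) => //.
- by rewrite sym.
- by rewrite eq_sym.
- move=> a b ea eb na nb.
  case: (hv1 _ ea) => ha; last by rewrite ha eqxx in na.
  case: (hv1 _ eb) => hb; last by rewrite hb eqxx in nb.
  by rewrite ha hb.
- move=> a b ea eb na nb; apply/eqP; apply: contraNT hD => nab.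
  by apply/existsP; exists a; apply/existsP; exists b; rewrite ea eb na nb nab.
Qed.
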